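(* Consider a common-value auction for a single item among at least two ''slow'' bidders and one ''fast'' bidder, all risk neutral. The value of the item evolves as $v_t = e^{m_t} v_0$ for $t \ge 0$, where $v_0>0$ and $m_t \sim N(-\tfrac{\sigma^2}{2} t, \sigma^2 t)$ (a geometric Brownian motion with $\sigma>0$, so $\mathbb{E}[v_{t+\delta}\mid v_t] = v_t$ for all $t,\delta\ge 0$). The slow bidders submit sealed bids at time $0$. With probability $p \in [0,1]$ (independently of the value process), the fast bidder gets an opportunity at time $\Delta>0$, after observing the slow bidders' bids and $v_\Delta$, to submit a bid that outbids the highest slow bid; otherwise the fast bidder does not bid. The highest bidder wins, pays its own bid, and receives the realized value of the item (with expected value $v_0$ given time-$0$ information). Then in equilibrium the winning slow bidder's time-$0$ bid is the largest $b_0^S \in [0, v_0]$ solving $$(1-p)(v_0 - b_0^S) + p\, P(v_\Delta < b_0^S)\big(\mathbb{E}[v_\Delta \mid v_\Delta < b_0^S] - b_0^S\big) = 0,$$ and the slow bidder wins the item with probability $p\, P(v_\Delta < b_0^S) + (1-p)$.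
   Context: A bidder's payoff is the value of the item minus its bid if it wins, and $0$ otherwise. If given a revision opportunity, the fast bidder outbids the highest slow bid $b$ (paying $b$) exactly when $v_\Delta > b$. *)

(* Defs.v *)
From HB Require Import structures.
From mathcomp Require Import all_boot all_order all_algebra.
From mathcomp Require Import all_classical all_reals all_analysis.
From mathcomp Require Import normal_distribution.
Set Implicit Arguments. Unset Strict Implicit. Unset Printing Implicit Defensive.
Import Order.TTheory GRing.Theory Num.Theory.
Local Open Scope classical_set_scope.
Local Open Scope ring_scope.

(* Model: v_Delta = v0 * exp(m), m ~ N(-sigma^2 Delta/2, sigma^2 Delta).
   We integrate against the normal density (mean mu, standard deviation sd)
   with respect to Lebesgue measure on R. *)

Definition gbm_mean {R : realType} (sigma Delta : R) : R := - (sigma ^+ 2 * Delta) / 2.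
Definition gbm_sd {R : realType} (sigma Delta : R) : R := sigma * Num.sqrt Delta.

Definition vD {R : realType} (v0 x : R) : R := v0 * expR x.

(* E[ g(v_Delta) ; v_Delta in A ] *)
Definition lnE {R : realType} (sigma Delta v0 : R) (A : set R) (g : R -> R) : R :=
  Rintegral (@lebesgue_measure R) [set x | A (vD v0 x)]
    (fun x => g (vD v0 x) * normal_pdf (gbm_mean sigma Delta) (gbm_sd sigma Delta) x).

Definition P_lt {R : realType} (sigma Delta v0 b : R) : R :=
  lnE sigma Delta v0 [set y | y < b] (fun _ => 1).
Definition P_le {R : realType} (sigma Delta v0 b : R) : R :=
  lnE sigma Delta v0 [set y | y <= b] (fun _ => 1).

(* E[v_Delta | v_Delta < b] = E[v_Delta ; v_Delta < b] / P(v_Delta < b)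
   (mathcomp convention x / 0 = 0 when the conditioning event is null) *)
Definition condE_lt {R : realType} (sigma Delta v0 b : R) : R :=
  lnE sigma Delta v0 [set y | y < b] id / P_lt sigma Delta v0 b.

Definition zero_profit {R : realType} (sigma Delta v0 p b : R) : Prop :=
  (1 - p) * (v0 - b)
  + p * P_lt sigma Delta v0 b * (condE_lt sigma Delta v0 b - b) = 0.

(* highest slow bid (bids are nonnegative) *)
Definition high_bid {R : realType} n (bids : 'I_n -> R) : R :=
  \big[Order.max/0]_(i < n) bids i.

(* expected payoff of the slow bidders' highest bid B if it wins:
   - with prob. 1-p the fast bidder does not bid: value v0 (expected), pay B;
   - with prob. p the fast bidder observes v_Delta and outbids (paying B)
     exactly when v_Delta > B; otherwise the slow bidder wins, receiving an item
     whose expected value given v_Delta is v_Delta (martingale), and pays B. *)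
Definition win_profit {R : realType} (sigma Delta v0 p B : R) : R :=
  (1 - p) * (v0 - B) + p * lnE sigma Delta v0 [set y | y <= B] (fun y => y - B).

(* expected payoff of slow bidder i; ties among the highest slow bids are
   broken uniformly at random *)
Definition slow_payoff {R : realType} (sigma Delta v0 p : R) n
    (bids : 'I_n -> R) (i : 'I_n) : R :=
  if bids i == high_bid bids then
    win_profit sigma Delta v0 p (high_bid bids)
      / (#|[set j | bids j == high_bid bids]|)%:R
  else 0.

Definition deviate {R : realType} n (bids : 'I_n -> R) (i : 'I_n) (b : R) : 'I_n -> R :=
  fun j => if j == i then b else bids j.

Definition slow_equilibrium {R : realType} (sigma Delta v0 p : R) n
    (bids : 'I_n -> R) : Prop :=
  (forall i, 0 <= bids i) /\
  forall i (b : R), 0 <= b ->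
    slow_payoff sigma Delta v0 p (deviate bids i b) i
      <= slow_payoff sigma Delta v0 p bids i.

Definition slow_win_prob {R : realType} (sigma Delta v0 p : R) n (bids : 'I_n -> R) : R :=
  (1 - p) + p * P_le sigma Delta v0 (high_bid bids).

(* Main.v *)
Require Import Defs.
From HB Require Import structures.
From mathcomp Require Import all_boot all_order all_algebra.
From mathcomp Require Import all_classical all_reals all_analysis.
From mathcomp Require Import normal_distribution.
Import Order.TTheory GRing.Theory Num.Theory.
Local Open Scope classical_set_scope.
Local Open Scope ring_scope.
From mathcomp Require Import measurable_realfun.
From mathcomp Require Import lra.
Definition phi {R : realType} (sigma Delta : R) :=
  normal_pdf (gbm_mean sigma Delta) (gbm_sd sigma Delta).
Definition gf {R : realType} (v0 b x : R) : R := Num.max (b - vD v0 x) 0.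
Definition G {R : realType} (sigma Delta v0 b : R) : R :=
  Rintegral (@lebesgue_measure R) setT (fun x => gf v0 b x * phi sigma Delta x).

Lemma max0E {R : realType} (a : R) :
  (a <= 0 /\ Num.max a 0 = 0) \/ (0 < a /\ Num.max a 0 = a).
Proof.
case: (leP a 0) => h; [left; split=> //; exact: max_r | right; split=> //; exact: max_l (ltW h)].
Qed.

Lemma meas_vD {R : realType} (v0 : R) : measurable_fun setT (vD v0).
Proof.
by rewrite (_ : vD v0 = (cst v0) \* expR) //; apply: measurable_funM => //; exact: measurable_expR.
Qed.

Lemma meas_phi {R : realType} (sigma Delta : R) : measurable_fun setT (phi sigma Delta).
Proof. exact: measurable_normal_pdf. Qed.

Lemma meas_gf {R : realType} (v0 b : R) : measurable_fun setT (gf v0 b).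
Proof.
by rewrite (_ : gf v0 b = (fun x => b - vD v0 x) \max (cst 0)) //;
apply: measurable_maxr => //; apply: measurable_funB => //; exact: meas_vD.
Qed.

Lemma phi_ge0 {R : realType} (sigma Delta x : R) : 0 <= phi sigma Delta x.
Proof. exact: normal_pdf_ge0. Qed.

Lemma int_phi {R : realType} (sigma Delta : R) :
  (@lebesgue_measure R).-integrable setT (EFin \o phi sigma Delta).
Proof. exact: integrable_normal_pdf. Qed.

Lemma Rint_phi {R : realType} (sigma Delta : R) :
  Rintegral (@lebesgue_measure R) setT (phi sigma Delta) = 1.
Proof. by rewrite /Rintegral integral_normal_pdf. Qed.

Lemma int_bound {R : realType} (sigma Delta : R) (D : set R) (f : R -> R) (c : R) :
  measurable D -> measurable_fun D f ->
  (forall x, D x -> `|f x| <= c * phi sigma Delta x) ->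
  (@lebesgue_measure R).-integrable D (EFin \o f).
Proof.
move=> mD mf hf.
have mf' : measurable_fun D (EFin \o f) by exact/measurable_EFinP.
apply: (@le_integrable _ _ _ (@lebesgue_measure R) _ mD _ (fun x => (c * phi sigma Delta x)%:E) mf').
- move=> x Dx /=; rewrite lee_fin; apply: (le_trans (hf x Dx)); exact: ler_norm.
- under eq_fun do rewrite EFinM.
  apply: integrableZl => //.
  apply: (@integrableS _ _ _ (@lebesgue_measure R) setT D _ measurableT mD (subsetT D)); exact: int_phi.
Qed.

Lemma gf_ge0 {R : realType} (v0 b x : R) : 0 <= gf v0 b x.
Proof. by rewrite /gf le_max lexx orbT. Qed.

Lemma gf_le {R : realType} (v0 b x : R) : 0 < v0 -> gf v0 b x <= `|b|.
Proof.
move=> v0p; have hv : 0 < vD v0 x by rewrite /vD mulr_gt0 // expR_gt0.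
rewrite /gf; case: (max0E (b - vD v0 x)) => [][h ->]; first exact: normr_ge0.
apply: le_trans (ler_norm b); lra.
Qed.

Lemma int_gfphi {R : realType} (sigma Delta v0 b : R) : 0 < v0 ->
  (@lebesgue_measure R).-integrable setT
     (EFin \o (fun x => gf v0 b x * phi sigma Delta x)).
Proof.
move=> v0p; apply: (@int_bound R sigma Delta setT _ `|b|) => //.
  apply: measurable_funM; [exact: meas_gf | exact: meas_phi].
move=> x _; rewrite normrM (ger0_norm (phi_ge0 _ _ _)) (ger0_norm (gf_ge0 _ _ _)).
by rewrite ler_wpM2r ?phi_ge0 ?gf_le.
Qed.

Local Notation LM R := (@lebesgue_measure R).

Lemma G_ge0 {R : realType} (sigma Delta v0 b : R) : 0 <= G sigma Delta v0 b.
Proof. by apply: Rintegral_ge0 => x _; rewrite mulr_ge0 ?gf_ge0 ?phi_ge0. Qed.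

Lemma G0 {R : realType} (sigma Delta v0 : R) : 0 < v0 -> G sigma Delta v0 0 = 0.
Proof.
move=> vp; rewrite /G (@eq_Rintegral _ _ _ (LM R) _ (fun=> 0)); last first.
  move=> x _; have hv : 0 < vD v0 x by rewrite /vD mulr_gt0 // expR_gt0.
  rewrite /gf; case: (max0E (0 - vD v0 x)) => [][h ->]; [by rewrite mul0r | lra].
by rewrite Rintegral_cst // mul0r.
Qed.

Lemma max0_lip {R : realType} (a c : R) : `|Num.max a 0 - Num.max c 0| <= `|a - c|.
Proof.
have h1 : a - c <= `|a - c| := ler_norm _.
have h2 : c - a <= `|a - c| by rewrite distrC ler_norm.
rewrite ler_norml; case: (max0E a) => [][ha ->]; case: (max0E c) => [][hc ->];
  apply/andP; split; lra.
Qed.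

Lemma G_mono {R : realType} (sigma Delta v0 b b' : R) : 0 < v0 -> b <= b' ->
  G sigma Delta v0 b <= G sigma Delta v0 b'.
Proof.
move=> vp bb; apply: (@le_Rintegral _ _ _ (LM R)) => //; try exact: int_gfphi.
move=> x _; rewrite ler_wpM2r ?phi_ge0 // /gf.
case: (max0E (b - vD v0 x)) => [][h1 ->]; case: (max0E (b' - vD v0 x)) => [][h2 ->]; lra.
Qed.

Lemma G_lip {R : realType} (sigma Delta v0 b b' : R) : 0 < v0 ->
  `|G sigma Delta v0 b - G sigma Delta v0 b'| <= `|b - b'|.
Proof.
move=> vp; rewrite /G -(@RintegralB _ _ _ (LM R)) //; try exact: int_gfphi.
have mF : measurable_fun setT
    (fun x => gf v0 b x * phi sigma Delta x - gf v0 b' x * phi sigma Delta x).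
  by apply: measurable_funB; apply: measurable_funM; (exact: meas_gf || exact: meas_phi).
have hF x : `|gf v0 b x * phi sigma Delta x - gf v0 b' x * phi sigma Delta x|
    <= `|b - b'| * phi sigma Delta x.
  rewrite -mulrBl normrM (ger0_norm (phi_ge0 _ _ _)) ler_wpM2r ?phi_ge0 //.
  have := max0_lip (b - vD v0 x) (b' - vD v0 x).
  by rewrite (_ : b - vD v0 x - (b' - vD v0 x) = b - b') //; lra.
have iF := @int_bound R sigma Delta setT _ `|b - b'| measurableT mF (fun x _ => hF x).
apply: le_trans (@le_normr_Rintegral _ _ _ (LM R) setT _ measurableT iF) _.
apply: le_trans (@le_Rintegral _ _ _ (LM R) setT _ (fun x => `|b - b'| * phi sigma Delta x) measurableT _ _ _) _.
- apply: (@int_bound R sigma Delta setT _ `|b - b'| measurableT).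
    exact: measurableT_comp.
  by move=> x _; rewrite normr_id; exact: hF.
- apply: (@int_bound R sigma Delta setT _ `|b - b'| measurableT).
    by apply: measurable_funM => //; exact: meas_phi.
  move=> x _; rewrite normrM (ger0_norm (phi_ge0 _ _ _)) normr_id //.
- by move=> x _; exact: hF.
by rewrite (@RintegralZl _ _ _ (LM R)) // ?Rint_phi ?mulr1 //; exact: int_phi.
Qed.

Lemma vlt {R : realType} (v0 b x : R) : 0 < v0 -> 0 < b ->
  (vD v0 x < b) = (x < ln (b / v0)).
Proof.
move=> vp bp; rewrite -[RHS]ltr_expR lnK ?posrE ?divr_gt0 // ltr_pdivlMr // mulrC //.
Qed.

Lemma vle {R : realType} (v0 b x : R) : 0 < v0 -> 0 < b ->
  (vD v0 x <= b) = (x <= ln (b / v0)).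
Proof.
move=> vp bp; rewrite -[RHS]ler_expR lnK ?posrE ?divr_gt0 // ler_pdivlMr // mulrC //.
Qed.

Lemma Slt_itv {R : realType} (v0 b : R) : 0 < v0 -> 0 < b ->
  [set x | vD v0 x < b] = [set` Interval -oo%O (BLeft (ln (b / v0)))].
Proof.
move=> vp bp; apply/seteqP; split => x /=; rewrite in_itv /= vlt //.
Qed.

Lemma Sle_itv {R : realType} (v0 b : R) : 0 < v0 -> 0 < b ->
  [set x | vD v0 x <= b] = [set` Interval -oo%O (BRight (ln (b / v0)))].
Proof.
move=> vp bp; apply/seteqP; split => x /=; rewrite in_itv /= vle //.
Qed.

Lemma Slt0 {R : realType} (v0 b : R) : 0 < v0 -> b <= 0 ->
  [set x | vD v0 x < b] = set0.
Proof.
move=> vp bp; apply/seteqP; split => x //= h; have : 0 < vD v0 x by rewrite /vD mulr_gt0 // expR_gt0.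
lra.
Qed.

Lemma Sle0 {R : realType} (v0 b : R) : 0 < v0 -> b <= 0 ->
  [set x | vD v0 x <= b] = set0.
Proof.
move=> vp bp; apply/seteqP; split => x //= h; have : 0 < vD v0 x by rewrite /vD mulr_gt0 // expR_gt0.
lra.
Qed.

Lemma mSlt {R : realType} (v0 b : R) : 0 < v0 -> measurable [set x : R | vD v0 x < b].
Proof.
move=> vp; case: (leP b 0) => bp; first by rewrite Slt0.
by rewrite Slt_itv //; exact: measurable_itv.
Qed.

Lemma mSle {R : realType} (v0 b : R) : 0 < v0 -> measurable [set x : R | vD v0 x <= b].
Proof.
move=> vp; case: (leP b 0) => bp; first by rewrite Sle0.
by rewrite Sle_itv //; exact: measurable_itv.
Qed.

Lemma RintN_ge0 {R : realType} (f : R -> R) : (forall x, 0 <= f x) ->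
  Rintegral (LM R) setT (fun x => - f x) = - Rintegral (LM R) setT f.
Proof.
move=> f0; rewrite /Rintegral -fineN -integral_ge0N; last by move=> x _; rewrite lee_fin.
by congr fine; apply: eq_integral => x _; rewrite EFinN.
Qed.

Lemma lnE_le_G {R : realType} (sigma Delta v0 b : R) : 0 < v0 ->
  lnE sigma Delta v0 [set y | y <= b] (fun y => y - b) = - G sigma Delta v0 b.
Proof.
move=> vp; rewrite /lnE /G Rintegral_mkcond -RintN_ge0; last first.
  by move=> x; rewrite mulr_ge0 ?gf_ge0 ?phi_ge0.
apply: eq_Rintegral => x _; rewrite patchE.
case: (boolP (x \in _)) => [/set_mem /= h | /negP hn].
  rewrite /gf; case: (max0E (b - vD v0 x)) => [][h1 ->].
    by rewrite (_ : vD v0 x - b = 0) ?mul0r ?oppr0 //; lra.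
  by rewrite -mulNr opprB.
have h : ~ (vD v0 x <= b) by move=> h; apply: hn; exact: mem_set.
rewrite /gf; case: (max0E (b - vD v0 x)) => [][h1 ->]; first by rewrite mul0r oppr0.
by exfalso; apply: h; lra.
Qed.

Lemma lnE_lt_G {R : realType} (sigma Delta v0 b : R) : 0 < v0 ->
  lnE sigma Delta v0 [set y | y < b] (fun y => y - b) = - G sigma Delta v0 b.
Proof.
move=> vp; rewrite /lnE /G Rintegral_mkcond -RintN_ge0; last first.
  by move=> x; rewrite mulr_ge0 ?gf_ge0 ?phi_ge0.
apply: eq_Rintegral => x _; rewrite patchE.
case: (boolP (x \in _)) => [/set_mem /= h | /negP hn].
  rewrite /gf; case: (max0E (b - vD v0 x)) => [][h1 ->].
    by exfalso; lra.
  by rewrite -mulNr opprB.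
have h : ~ (vD v0 x < b) by move=> h; apply: hn; exact: mem_set.
rewrite /gf; case: (max0E (b - vD v0 x)) => [][h1 ->]; first by rewrite mul0r oppr0.
by exfalso; apply: h; lra.
Qed.

Lemma int_bound' {R : realType} (sigma Delta : R) (D : set R) (f : R -> R) (c : R) :
  measurable D -> measurable_fun setT f ->
  (forall x, D x -> `|f x| <= c * phi sigma Delta x) ->
  (@lebesgue_measure R).-integrable D (EFin \o f).
Proof.
move=> mD mf; apply: int_bound => //.
exact: (measurable_funS measurableT (subsetT D) mf).
Qed.

Lemma vD_gt0 {R : realType} (v0 x : R) : 0 < v0 -> 0 < vD v0 x.
Proof. by move=> vp; rewrite /vD mulr_gt0 // expR_gt0. Qed.

Lemma int_S_one {R : realType} (sigma Delta v0 b : R) : 0 < v0 ->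
  (LM R).-integrable [set x | vD v0 x < b] (EFin \o (fun x => 1 * phi sigma Delta x)).
Proof.
move=> vp; apply: (@int_bound' R sigma Delta _ _ 1); first exact: mSlt.
  by apply: measurable_funM => //; exact: meas_phi.
by move=> x _; rewrite mul1r ger0_norm ?phi_ge0.
Qed.

Lemma int_S_v {R : realType} (sigma Delta v0 b : R) : 0 < v0 ->
  (LM R).-integrable [set x | vD v0 x < b] (EFin \o (fun x => vD v0 x * phi sigma Delta x)).
Proof.
move=> vp; apply: (@int_bound' R sigma Delta _ _ `|b|); first exact: mSlt.
  by apply: measurable_funM; [exact: meas_vD | exact: meas_phi].
move=> x /= h; rewrite normrM (ger0_norm (phi_ge0 _ _ _)) (ger0_norm (ltW (vD_gt0 v0 x vp))).
rewrite ler_wpM2r ?phi_ge0 //; apply: (le_trans _ (ler_norm b)); exact: ltW.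
Qed.

Lemma int_S_b {R : realType} (sigma Delta v0 b c : R) : 0 < v0 ->
  (LM R).-integrable [set x | vD v0 x < b] (EFin \o (fun x => c * (1 * phi sigma Delta x))).
Proof.
move=> vp; apply: (@int_bound' R sigma Delta _ _ `|c|); first exact: mSlt.
  by apply: measurable_funM => //; apply: measurable_funM => //; exact: meas_phi.
by move=> x _; rewrite mul1r normrM (ger0_norm (phi_ge0 _ _ _)).
Qed.

Lemma lnE_lt_lin {R : realType} (sigma Delta v0 b : R) : 0 < v0 ->
  lnE sigma Delta v0 [set y | y < b] (fun y => y - b)
  = lnE sigma Delta v0 [set y | y < b] id - b * P_lt sigma Delta v0 b.
Proof.
move=> vp; rewrite /P_lt /lnE /=.
rewrite -(@RintegralZl _ _ _ (LM R)) ?(mSlt v0 b vp) //; last exact: int_S_one.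
rewrite -(@RintegralB _ _ _ (LM R)) ?(mSlt v0 b vp) //; last first.
- exact: int_S_b.
- exact: int_S_v.
- exact: (mSlt v0 b vp).
- by apply: (@eq_Rintegral _ _ _ (LM R)) => x _; rewrite mul1r mulrBl.
- exact: (mSlt v0 b vp).
Qed.

Lemma lnE_lt_id_bound {R : realType} (sigma Delta v0 b : R) : 0 < v0 ->
  `|lnE sigma Delta v0 [set y | y < b] id| <= `|b| * P_lt sigma Delta v0 b.
Proof.
move=> vp; rewrite /P_lt /lnE /=.
apply: le_trans (@le_normr_Rintegral _ _ _ (LM R) _ _ (mSlt v0 b vp) (int_S_v sigma Delta v0 b vp)) _.
rewrite -(@RintegralZl _ _ _ (LM R)) ?(mSlt v0 b vp) //; last exact: int_S_one.
apply: (@le_Rintegral _ _ _ (LM R)); first exact: mSlt.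
- apply: (@int_bound' R sigma Delta _ _ `|b|); first exact: mSlt.
    by apply: measurableT_comp => //; apply: measurable_funM; [exact: meas_vD | exact: meas_phi].
  move=> x /= h; rewrite normr_id normrM (ger0_norm (phi_ge0 _ _ _)) (ger0_norm (ltW (vD_gt0 v0 x vp))).
  rewrite ler_wpM2r ?phi_ge0 //; apply: (le_trans _ (ler_norm b)); exact: ltW.
- exact: int_S_b.
move=> x /= h; rewrite mul1r normrM (ger0_norm (phi_ge0 _ _ _)) (ger0_norm (ltW (vD_gt0 v0 x vp))).
rewrite ler_wpM2r ?phi_ge0 //; apply: (le_trans _ (ler_norm b)); exact: ltW.
exact: (mSlt v0 b vp).
Qed.

Lemma Ple_lt {R : realType} (sigma Delta v0 b : R) : 0 < v0 ->
  P_le sigma Delta v0 b = P_lt sigma Delta v0 b.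
Proof.
move=> vp; rewrite /P_le /P_lt /lnE /=.
case: (leP b 0) => bp; first by rewrite Sle0 // Slt0.
rewrite Sle_itv // Slt_itv //; symmetry; apply: Rintegral_itv_bndo_bndc.
rewrite -Slt_itv //; exact: int_S_one.
Qed.

Lemma phi_gt0 {R : realType} (sigma Delta x : R) : 0 < sigma -> 0 < Delta ->
  0 < phi sigma Delta x.
Proof.
move=> sp dp.
have sd : gbm_sd sigma Delta != 0 by rewrite /gbm_sd mulf_neq0 // gt_eqF // sqrtr_gt0.
by rewrite /phi /normal_pdf (negbTE sd) mulr_gt0 ?expR_gt0 // normal_peak_gt0.
Qed.

Lemma G_pos {R : realType} (sigma Delta v0 c : R) : 0 < sigma -> 0 < Delta ->
  0 < v0 -> 0 < c -> 0 < G sigma Delta v0 c.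
Proof.
move=> sp dp vp cp.
rewrite lt_neqAle G_ge0 andbT; apply/eqP => /esym HG.
pose F := fun x => (gf v0 c x * phi sigma Delta x)%:E.
have hint := @int_gfphi R sigma Delta v0 c vp.
have fin : (\int[LM R]_(x in setT) F x)%E \is a fin_num.
  exact: (integrable_fin_num measurableT hint).
have I0 : (\int[LM R]_(x in setT) F x = 0)%E.
  by rewrite -(fineK fin); congr EFin; exact: HG.
have mF : measurable_fun setT F.
  apply/measurable_EFinP; apply: measurable_funM; [exact: meas_gf | exact: meas_phi].
have Iabs : (\int[LM R]_(x in setT) `|F x| = 0)%E.
  rewrite -I0; apply: eq_integral => x _; rewrite gee0_abs // lee_fin.
  by rewrite mulr_ge0 ?gf_ge0 ?phi_ge0.
have := (ae_eq_integral_abs (LM R) measurableT mF).1 Iabs.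
case=> N [mN N0 sub].
pose a := ln (c / v0).
have subI : [set` Interval (BRight (a - 1)) (BLeft a)] `<=` N.
  move=> x; rewrite /= in_itv /= => /andP[h1 h2]; apply: sub => /= hF.
  have : vD v0 x < c by rewrite vlt.
  move=> hv; have := hF I; rewrite /F /=.
  move/(congr1 fine) => /= /eqP; rewrite mulf_eq0 => /orP[|]; last by rewrite gt_eqF // phi_gt0.
  by rewrite /gf; case: (max0E (c - vD v0 x)) => [][h ->]; [lra | rewrite gt_eqF //; lra].
have := @le_measure _ _ _ (LM R) _ _ _ _ subI.
rewrite !inE => /(_ (measurable_itv _) mN).
have H0 : (LM R N <= 0)%E by rewrite N0.
have H1 : ((1:R)%:E <= LM R [set` Interval (BRight (a - 1)%R) (BLeft a)])%E.
  rewrite lebesgue_measure_itv /= ifT; last by rewrite lte_fin; lra.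
  by rewrite -EFinD lee_fin; lra.
move=> H; have := le_trans H1 (le_trans H H0).
by rewrite lee_fin; lra.
Qed.

Lemma key_id {R : realType} (sigma Delta v0 b : R) : 0 < v0 ->
  P_lt sigma Delta v0 b * (condE_lt sigma Delta v0 b - b) = - G sigma Delta v0 b.
Proof.
move=> vp; rewrite -(lnE_lt_G sigma Delta v0 b vp) lnE_lt_lin // /condE_lt.
have [P0|Pn0] := eqVneq (P_lt sigma Delta v0 b) 0.
  rewrite P0 mul0r mulr0 subr0.
  have := lnE_lt_id_bound sigma Delta v0 b vp; rewrite P0 mulr0 normr_le0 => /eqP -> //.
by rewrite mulrBr mulrC divfK // mulrC.
Qed.

Lemma WE {R : realType} (sigma Delta v0 p b : R) : 0 < v0 ->
  win_profit sigma Delta v0 p b = (1 - p) * (v0 - b) - p * G sigma Delta v0 b.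
Proof. by move=> vp; rewrite /win_profit lnE_le_G // mulrN. Qed.

Lemma zpE {R : realType} (sigma Delta v0 p b : R) : 0 < v0 ->
  zero_profit sigma Delta v0 p b <-> win_profit sigma Delta v0 p b = 0.
Proof.
move=> vp; rewrite /zero_profit -mulrA key_id // WE // mulrN.
by [].
Qed.

Import numFieldNormedType.Exports.

Lemma W_lip {R : realType} (sigma Delta v0 p b b' : R) : 0 < v0 -> 0 <= p -> p <= 1 ->
  `|win_profit sigma Delta v0 p b - win_profit sigma Delta v0 p b'| <= `|b - b'|.
Proof.
move=> vp p0 p1; rewrite !WE //.
have := G_lip sigma Delta v0 b b' vp; rewrite ler_norml => /andP[g1 g2].
have d1 : b - b' <= `|b - b'| := ler_norm _.
have d2 : b' - b <= `|b - b'| by rewrite distrC ler_norm.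
set g := G sigma Delta v0 b - G sigma Delta v0 b' in g1 g2.
set d := `|b - b'| in d1 d2 g1 g2 *.
have e1 : 0 <= p * (d - g) by rewrite mulr_ge0 // subr_ge0.
have e2 : 0 <= p * (d + g) by rewrite mulr_ge0 //; lra.
have e3 : 0 <= (1 - p) * (d - (b - b')) by rewrite mulr_ge0 //; lra.
have e4 : 0 <= (1 - p) * (d - (b' - b)) by rewrite mulr_ge0 //; lra.
rewrite ler_norml; apply/andP; split.
  have -> : (1 - p) * (v0 - b) - p * G sigma Delta v0 b - ((1 - p) * (v0 - b') - p * G sigma Delta v0 b')
    = (1 - p) * (b' - b) - p * g by rewrite /g; lra.
  nra.
have -> : (1 - p) * (v0 - b) - p * G sigma Delta v0 b - ((1 - p) * (v0 - b') - p * G sigma Delta v0 b')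
    = (1 - p) * (b' - b) - p * g by rewrite /g; lra.
nra.
Qed.

Lemma lip_cont {R : realType} (f : R -> R) :
  (forall x y, `|f x - f y| <= `|x - y|) -> continuous f.
Proof.
move=> hf x; apply/cvgrPdist_lt => e e0.
exists e => //= t; rewrite /ball /= => ht.
exact: le_lt_trans (hf x t) ht.
Qed.

Lemma W_cont {R : realType} (sigma Delta v0 p : R) : 0 < v0 -> 0 <= p -> p <= 1 ->
  continuous (win_profit sigma Delta v0 p).
Proof. by move=> vp p0 p1; apply: lip_cont => x y; exact: W_lip. Qed.

Lemma W_mono {R : realType} (sigma Delta v0 p b b' : R) : 0 < v0 -> 0 <= p -> p <= 1 ->
  b <= b' -> win_profit sigma Delta v0 p b' <= win_profit sigma Delta v0 p b.
Proof.
move=> vp p0 p1 bb; rewrite !WE //.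
have := G_mono sigma Delta v0 b b' vp bb => hG.
have e1 : 0 <= p * (G sigma Delta v0 b' - G sigma Delta v0 b) by rewrite mulr_ge0 // subr_ge0.
have e2 : 0 <= (1 - p) * (b' - b) by rewrite mulr_ge0 //; lra.
nra.
Qed.

Lemma W0 {R : realType} (sigma Delta v0 p : R) : 0 < v0 -> p <= 1 ->
  0 <= win_profit sigma Delta v0 p 0.
Proof. by move=> vp p1; rewrite WE // G0 // mulr0 subr0 subr0 mulr_ge0 //; lra. Qed.

Lemma Wv0 {R : realType} (sigma Delta v0 p : R) : 0 < v0 -> 0 <= p ->
  win_profit sigma Delta v0 p v0 <= 0.
Proof.
move=> vp p0; rewrite WE // subrr mulr0 sub0r oppr_le0 mulr_ge0 //; exact: G_ge0.
Qed.

Lemma Wlt {R : realType} (sigma Delta v0 p a b : R) : 0 < sigma -> 0 < Delta -> 0 < v0 ->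
  0 <= p -> p <= 1 -> 0 <= a -> a < b ->
  win_profit sigma Delta v0 p b < win_profit sigma Delta v0 p a \/
  win_profit sigma Delta v0 p b < 0.
Proof.
move=> sp dp vp p0 p1 a0 ab.
have [p1'|pe] := ltP p 1.
  left; rewrite !WE //.
  have hG := G_mono sigma Delta v0 a b vp (ltW ab).
  have e1 : 0 <= p * (G sigma Delta v0 b - G sigma Delta v0 a) by rewrite mulr_ge0 // subr_ge0.
  have e2 : 0 < (1 - p) * (b - a) by rewrite mulr_gt0 //; lra.
  nra.
right; have -> : p = 1 by lra.
rewrite WE // subrr mul0r sub0r mul1r oppr_lt0; apply: G_pos => //; lra.
Qed.

Import numFieldNormedType.Exports.
Lemma hb_ge {R : realType} {n : nat} (bids : 'I_n -> R) i : bids i <= high_bid bids.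
Proof. exact: le_bigmax. Qed.

Lemma hb_ge0 {R : realType} {n : nat} (bids : 'I_n -> R) : 0 <= high_bid bids.
Proof. exact: bigmax_ge_id. Qed.

Lemma hb_le {R : realType} {n : nat} (bids : 'I_n -> R) c : 0 <= c -> (forall i, bids i <= c) ->
  high_bid bids <= c.
Proof. by move=> c0 h; apply: bigmax_le. Qed.

Lemma hb_att {R : realType} {n : nat} (bids : 'I_n -> R) : (0 < n)%N -> (forall i, 0 <= bids i) ->
  exists i, bids i = high_bid bids.
Proof.
move=> n0 h; have [i _ e] := @eq_bigmax _ _ _ 0 (Ordinal n0) (fun _ => true) bids isT (fun i _ => h i).
by exists i; symmetry; exact: e.
Qed.

Lemma other_idx {n : nat} (hn : (2 <= n)%N) (i : 'I_n) : exists j : 'I_n, j != i.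
Proof.
have h0 : (0 < n)%N by apply: leq_trans hn.
have h1 : (1 < n)%N by [].
case: (eqVneq i (Ordinal h0)) => [->|ne]; last by exists (Ordinal h0); rewrite eq_sym.
by exists (Ordinal h1).
Qed.

Lemma SP0 {R : realType} (sigma Delta v0 p : R) {n : nat} (bids : 'I_n -> R) i :
  bids i != high_bid bids -> slow_payoff sigma Delta v0 p bids i = 0.
Proof. by move=> h; rewrite /slow_payoff ifN. Qed.

Lemma dev_i {R : realType} {n : nat} (bids : 'I_n -> R) i b : deviate bids i b i = b.
Proof. by rewrite /deviate eqxx. Qed.

Lemma dev_j {R : realType} {n : nat} (bids : 'I_n -> R) i j b : j != i -> deviate bids i b j = bids j.
Proof. by move=> h; rewrite /deviate ifN. Qed.

Lemma sole_win {R : realType} (sigma Delta v0 p : R) {n : nat} (bids : 'I_n -> R) i b :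
  0 <= b -> (forall j, j != i -> bids j < b) ->
  slow_payoff sigma Delta v0 p (deviate bids i b) i = win_profit sigma Delta v0 p b.
Proof.
move=> b0 h.
have hb : high_bid (deviate bids i b) = b.
  apply/le_anti/andP; split; last by have := hb_ge (deviate bids i b) i; rewrite dev_i.
  apply: hb_le => // j; case: (eqVneq j i) => [->|ne]; first by rewrite dev_i.
  by rewrite dev_j // ltW // h.
rewrite /slow_payoff hb dev_i eqxx.
have -> : #|[set j | deviate bids i b j == b]| = 1%N.
  rewrite -(card1 i); apply: eq_card => j /=.
  apply/idP/idP => [/set_mem /= fj | /eqP ->]; last by apply: mem_set; rewrite /= dev_i.
  apply/eqP; case: (eqVneq j i) => // ne.
  by move: fj; rewrite dev_j // lt_eqF // h.
by rewrite divr1.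
Qed.

Lemma payoff_ge0 {R : realType} (sigma Delta v0 p : R) {n : nat} (bids : 'I_n -> R) i :
  0 < v0 -> p <= 1 -> bids i = 0 ->
  0 <= slow_payoff sigma Delta v0 p bids i.
Proof.
move=> vp p1 b0; rewrite /slow_payoff; case: ifPn => [/eqP h|_] //.
by rewrite -h b0 divr_ge0 ?W0.
Qed.

Lemma hb_const {R : realType} {n : nat} (c : R) : (0 < n)%N -> 0 <= c ->
  high_bid (fun _ : 'I_n => c) = c.
Proof.
move=> n0 c0; apply/le_anti/andP; split; first exact: hb_le.
exact: (hb_ge (fun _ : 'I_n => c) (Ordinal n0)).
Qed.

Lemma exist_eq {R : realType} (n : nat) (sigma Delta v0 p : R) :
  (2 <= n)%N -> 0 < sigma -> 0 < Delta -> 0 < v0 -> 0 <= p -> p <= 1 ->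
  exists bids : 'I_n -> R, slow_equilibrium sigma Delta v0 p bids.
Proof.
move=> hn sp dp vp p0 p1.
have n0 : (0 < n)%N by apply: leq_trans hn.
have hm : Num.min (win_profit sigma Delta v0 p 0) (win_profit sigma Delta v0 p v0) <= 0 <=
   Num.max (win_profit sigma Delta v0 p 0) (win_profit sigma Delta v0 p v0).
  by rewrite ge_min le_max W0 // Wv0 // orbT.
have [c cin Wc] := @IVT R (win_profit sigma Delta v0 p) 0 v0 0 (ltW vp)
  (continuous_subspaceT (W_cont sigma Delta v0 p vp p0 p1)) hm.
move: cin; rewrite in_itv /= => /andP[c0 cv].
exists (fun _ => c); split => // i b b0.
rewrite {2}/slow_payoff hb_const // eqxx Wc mul0r.
rewrite /slow_payoff; case: ifPn => [/eqP h|_] //.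
rewrite -h dev_i; rewrite dev_i in h.
have [j ji] := other_idx hn i.
have cb : c <= b by rewrite h; have := hb_ge (deviate (fun _ : 'I_n => c) i b) j; rewrite dev_j.
apply: mulr_le0_ge0; last by rewrite invr_ge0.
by rewrite -Wc; apply: W_mono.
Qed.

Lemma eq_WB {R : realType} {n : nat} (sigma Delta v0 p : R) (bids : 'I_n -> R) :
  (2 <= n)%N -> 0 < sigma -> 0 < Delta -> 0 < v0 -> 0 <= p -> p <= 1 ->
  slow_equilibrium sigma Delta v0 p bids ->
  win_profit sigma Delta v0 p (high_bid bids) = 0.
Proof.
move=> hn sp dp vp p0 p1 [bge heq].
have n0 : (0 < n)%N by apply: leq_trans hn.
set B := high_bid bids.
set W := win_profit sigma Delta v0 p.
have [i iB] := hb_att bids n0 bge.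
apply/le_anti/andP; split; last first.
  have := heq i 0 (lexx 0).
  have := payoff_ge0 sigma Delta v0 p (deviate bids i 0) i vp p1 (dev_i bids i 0).
  move=> h1 h2; have := le_trans h1 h2.
  rewrite /slow_payoff iB eqxx -/B -/W.
  set k := (#|_|)%:R => hk.
  have kp : 0 < k.
    rewrite /k ltr0n; apply/card_gt0P; exists i; apply: mem_set; rewrite /= iB.
    exact: eqxx.
  by rewrite -(divfK (lt0r_neq0 kp) (W B)) mulr_ge0 // ltW.
rewrite leNgt; apply/negP => WBp.
pose e := W B / 4.
have ep : 0 < e by rewrite /e divr_gt0.
have Wlow : W B - e <= W (B + e).
  have := W_lip sigma Delta v0 p (B + e) B vp p0 p1; rewrite -/W.
  rewrite (_ : B + e - B = e); last by lra.
  rewrite (ger0_norm (ltW ep)) ler_norml => /andP[h _]; lra.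
have [j hj] : exists j, slow_payoff sigma Delta v0 p bids j <= W B / 2.
  case: (boolP [exists j, bids j != B]) => [/existsP [j hj]|/existsPn hall].
    by exists j; rewrite SP0 // divr_ge0 // ltW.
  exists i; rewrite /slow_payoff iB eqxx -/B -/W.
  have -> : #|[set j | bids j == B]| = n.
    rewrite -[RHS]card_ord; apply: eq_card => j /=; rewrite inE.
    apply: (@mem_set _ _ j); have := hall j; rewrite negbK //.
  rewrite ler_pM2l // lef_pV2 ?posrE ?ltr0n //; first by rewrite ler_nat.
have Bge : 0 <= B by exact: hb_ge0.
have := heq j (B + e) (addr_ge0 Bge (ltW ep)).
rewrite sole_win; last first.
- move=> l lj; apply: le_lt_trans (hb_ge bids l) _; rewrite -/B; lra.
- rewrite addr_ge0 // ltW //.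
rewrite -/W => h; have := le_trans h hj.
have ee : e = W B / 4 by [].
lra.
Qed.

Local Close Scope classical_set_scope.
Theorem mainTheorem5 (R : realType) (n : nat) (sigma Delta v0 p : R) :
  (2 <= n)%N -> 0 < sigma -> 0 < Delta -> 0 < v0 -> 0 <= p -> p <= 1 ->
  (exists bids : 'I_n -> R, slow_equilibrium sigma Delta v0 p bids) /\
  (forall bids : 'I_n -> R, slow_equilibrium sigma Delta v0 p bids ->
     let b0S := high_bid bids in
     [/\ 0 <= b0S <= v0,
         zero_profit sigma Delta v0 p b0S,
         (forall b : R, 0 <= b <= v0 -> zero_profit sigma Delta v0 p b -> b <= b0S)
       & slow_win_prob sigma Delta v0 p bids
           = p * P_lt sigma Delta v0 b0S + (1 - p)]).
Proof.
move=> hn sp dp vp p0 p1; split; first exact: exist_eq.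
intros bids heqm; cbv zeta.
have WB := eq_WB sigma Delta v0 p bids hn sp dp vp p0 p1 heqm.
have B0 := hb_ge0 bids.
split.
- apply/andP; split => //; rewrite leNgt; apply/negP => Bv.
  have := Wv0 sigma Delta v0 p vp p0.
  case: (Wlt sigma Delta v0 p v0 (high_bid bids) sp dp vp p0 p1 (ltW vp) Bv); rewrite WB => h; lra.
- by apply/zpE.
- move=> b /andP[b0 bv] /(zpE _ _ _ _ _ vp) Wb; rewrite leNgt; apply/negP => Bb.
  case: (Wlt sigma Delta v0 p (high_bid bids) b sp dp vp p0 p1 B0 Bb); rewrite ?WB ?Wb => h; lra.
- by rewrite /slow_win_prob Ple_lt // addrC.
Qed.
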